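(* Let $\mathcal{A}$ and $\mathcal{B}$ be semi-classical test spaces with outcome sets $X,Y$, and let $\omega$ be a probability weight on $\mathcal{A}\times\mathcal{B}$. If $\omega$ is both non-signaling and dispersion-free, then $\omega=\alpha\otimes\beta$, i.e. $\omega(x,y)=\alpha(x)\beta(y)$ for all $x\in X,y\in Y$, where $\alpha$ and $\beta$ are dispersion-free probability weights on $\mathcal{A}$ and $\mathcal{B}$ respectively.
   Context: A test space is an irredundant collection of nonempty sets (tests); it is semi-classical if distinct tests are disjoint. A probability weight is a function into $[0,1]$ summing to $1$ over each test; it is dispersion-free if it takes only the values $0$ and $1$. $\mathcal{A}\times\mathcal{B}=\{E\times F:E\in\mathcal{A},F\in\mathcal{B}\}$. A probability weight $\omega$ on $\mathcal{A}\times\mathcal{B}$ is non-signaling if $\sum_{x\in E}\omega(x,y)$ is independent of $E\in\mathcal{A}$ for each $y$ and $\sum_{y\in F}\omega(x,y)$ is independent of $F\in\mathcal{B}$ for each $x$. *)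

(* Defs.v *)
From HB Require Import structures.
From mathcomp Require Import all_boot all_order all_algebra.
From mathcomp Require Import all_classical all_reals.
From mathcomp Require Import ereal esum.
Set Implicit Arguments. Unset Strict Implicit. Unset Printing Implicit Defensive.
Import Order.TTheory GRing.Theory Num.Theory.
Local Open Scope classical_set_scope.
Local Open Scope ring_scope.

Definition test_space (X : choiceType) (A : set (set X)) : Prop :=
  (forall E, A E -> E !=set0) /\
  (forall E F, A E -> A F -> E `<=` F -> E = F).

Definition semi_classical (X : choiceType) (A : set (set X)) : Prop :=
  forall E F, A E -> A F -> E <> F -> E `&` F = set0.

Definition outcomes (X : choiceType) (A : set (set X)) : set X :=
  \bigcup_(E in A) E.

Definition prob_weight (R : realType) (X : choiceType) (A : set (set X)) (w : X -> R)
  : Prop :=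
  (forall x, outcomes A x -> 0 <= w x <= 1) /\
  (forall E, A E -> (\esum_(x in E) (w x)%:E)%E = 1%E).

Definition dispersion_free (R : realType) (X : choiceType) (A : set (set X)) (w : X -> R)
  : Prop :=
  forall x, outcomes A x -> w x = 0 \/ w x = 1.

Definition prod_ts (X Y : choiceType) (A : set (set X)) (B : set (set Y))
  : set (set (X * Y)) :=
  [set G | exists E F, [/\ A E, B F & G = E `*` F]].

Definition non_signaling (R : realType) (X Y : choiceType) (A : set (set X))
  (B : set (set Y)) (w : X * Y -> R) : Prop :=
  (forall y, outcomes B y -> forall E E', A E -> A E' ->
     (\esum_(x in E) (w (x, y))%:E)%E = (\esum_(x in E') (w (x, y))%:E)%E) /\
  (forall x, outcomes A x -> forall F F', B F -> B F' ->
     (\esum_(y in F) (w (x, y))%:E)%E = (\esum_(y in F') (w (x, y))%:E)%E).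

(* Main.v *)
Require Import Defs.
From HB Require Import structures.
From mathcomp Require Import all_boot all_order all_algebra.
From mathcomp Require Import all_classical all_reals.
From mathcomp Require Import ereal esum.
From mathcomp Require Import lra.
Import Order.TTheory GRing.Theory Num.Theory.
Local Open Scope classical_set_scope.
Local Open Scope ring_scope.


Section H.
Variables (R : realType) (T : choiceType) (S : set T) (f : T -> R).
Hypothesis f01 : forall x, S x -> f x = 0 \/ f x = 1.

Let fge0 x : S x -> (0 <= (f x)%:E)%E.
Proof. by move=> /f01 [] ->. Qed.

Lemma esum_one x0 : S x0 -> f x0 = 1 -> (forall x, S x -> f x = 1 -> x = x0) ->
  (\esum_(x in S) (f x)%:E)%E = 1%E.
Proof.
move=> Sx0 fx0 u.
rewrite (esumID [set x0]) //.
rewrite (setIidr (_ : [set x0] `<=` S)); last by move=> z ->.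
rewrite esum_set1 ?fx0 // esum1 ?adde0 // => x [Sx nx].
case: (f01 x Sx) => [->//|fx1]; exfalso; apply: nx; exact: u.
Qed.

Lemma esum_zero : (forall x, S x -> f x <> 1) -> (\esum_(x in S) (f x)%:E)%E = 0%E.
Proof.
move=> h; apply: esum1 => x Sx; case: (f01 x Sx) => [->//|fx1].
by exfalso; apply: (h x Sx).
Qed.

Lemma esum_ex : (\esum_(x in S) (f x)%:E)%E = 1%E -> exists x, S x /\ f x = 1.
Proof.
move=> e; apply: contrapT => nh.
have : (\esum_(x in S) (f x)%:E)%E = 0%E.
  apply: esum_zero => x Sx fx; apply: nh; by exists x.
by rewrite e => /eqP; rewrite eqe oner_eq0.
Qed.

Lemma esum_uniq : (\esum_(x in S) (f x)%:E)%E = 1%E ->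
  forall x y, S x -> S y -> f x = 1 -> f y = 1 -> x = y.
Proof.
move=> e x y Sx Sy fx fy; apply: contrapT => nxy.
move: e; rewrite (esumID [set x]) //.
rewrite (setIidr (_ : [set x] `<=` S)); last by move=> z ->.
rewrite esum_set1; last by rewrite fx.
rewrite fx.
rewrite (esumID [set y]); last by move=> z [Sz _]; exact: fge0.
rewrite (setIidr (_ : [set y] `<=` S `&` ~` [set x])); last first.
  by move=> z -> ; split => // zx; apply: nxy; rewrite zx.
rewrite esum_set1; last by rewrite fy.
rewrite fy.
have r0 : (0 <= \esum_(i in (S `&` ~` [set x]) `&` ~` [set y]) (f i)%:E)%E.
  by apply: esum_ge0 => z [[Sz _] _]; exact: fge0.
move: r0; set r := esum _ _ => r0 e.
have : (1 + (1 + r) <= 1)%E by rewrite e.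
case: r r0 {e} => [r||] //=; rewrite ?lee_fin => r0.
  lra.
Qed.
End H.
Arguments esum_ex {R T S f}.
Arguments esum_uniq {R T S f}.

Lemma df_exists (R : realType) (X : choiceType) (A : set (set X)) :
  test_space A -> semi_classical A ->
  exists a : X -> R, prob_weight A a /\ dispersion_free A a.
Proof.
move=> [ne _] sc.
have hex : forall E : {E | A E}, exists x, proj1_sig E x.
  by move=> -[E hE] /=; case: (ne E hE) => x Ex; exists x.
have [g hg] := @choice {E | A E} X (fun E x => proj1_sig E x) hex.
pose a x : R := if pselect (exists E, x = g E) then 1 else 0.
have key : forall E (hE : A E) x, E x -> a x = 1 -> x = g (exist _ E hE).
  move=> E hE x Ex; rewrite /a; case: (pselect (exists E, x = g E)) => hh; last first.
    by move=> /eqP; rewrite eq_sym oner_eq0.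
    move=> _; case: hh => -[E' hE'] xe.
    move: Ex; rewrite xe => Ex.
    have e : E' = E.
      apply: contrapT => nE; have h := sc E' E hE' hE nE.
      have : (E' `&` E) (g (exist _ E' hE')).
        by split => //; exact: (hg (exist _ E' hE')).
      by rewrite h.
    subst E'; by rewrite (Prop_irrelevance hE' hE).
have a01 : forall x, a x = 0 \/ a x = 1.
  by move=> x; rewrite /a; case: pselect; [right|left].
exists a; split; last by move=> x _; exact: a01.
split.
  by move=> x _; case: (a01 x) => ->; rewrite ?lexx ?ler01.
move=> E hE.
apply: (@esum_one _ _ _ _ _ (g (exist _ E hE))).
- by move=> x _; exact: a01.
- exact: (hg (exist _ E hE)).
- by rewrite /a; case: pselect => // -[]; exists (exist _ E hE).
- by move=> x Ex; exact: key.
Qed.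

Theorem lemma3p7 (R : realType) (X Y : choiceType)
  (A : set (set X)) (B : set (set Y)) (w : X * Y -> R) :
  test_space A -> test_space B ->
  semi_classical A -> semi_classical B ->
  prob_weight (prod_ts A B) w ->
  non_signaling A B w -> dispersion_free (prod_ts A B) w ->
  exists (a : X -> R) (b : Y -> R),
    [/\ prob_weight A a, dispersion_free A a,
        prob_weight B b, dispersion_free B b &
        forall x y, outcomes A x -> outcomes B y -> w (x, y) = a x * b y].
Proof.
move=> tsA tsB scA scB [_ pw] [nsA nsB] df.
case: (EM ((exists E, A E) /\ (exists F, B F))) => [[[E0 hE0] [F0 hF0]] | hne].
-
  have outP : forall E F x y, A E -> B F -> E x -> F y ->
     outcomes (prod_ts A B) (x, y).
    move=> E F x y hE hF Ex Fy; exists (E `*` F) => //.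
    by exists E, F.
  have w01 : forall E F x y, A E -> B F -> E x -> F y ->
      w (x, y) = 0 \/ w (x, y) = 1.
    by move=> E F x y hE hF Ex Fy; apply: df; exact: (outP E F).
  have f01 : forall E F, A E -> B F -> forall z, (E `*` F) z ->
      w z = 0 \/ w z = 1.
    by move=> E F hE hF [x y] [Ex Fy]; exact: (w01 E F).
  have s1 : forall E F, A E -> B F -> (\esum_(z in E `*` F) (w z)%:E)%E = 1%E.
    by move=> E F hE hF; apply: pw; exists E, F.
  have uq : forall E F, A E -> B F -> forall x y x' y', E x -> F y -> E x' -> F y' ->
      w (x, y) = 1 -> w (x', y') = 1 -> x = x' /\ y = y'.
    move=> E F hE hF x y x' y' Ex Fy Ex' Fy' h1 h2.
    have := esum_uniq (f01 E F hE hF) (s1 E F hE hF) (x, y) (x', y').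
    by move=> /(_ (conj Ex Fy) (conj Ex' Fy') h1 h2) [-> ->].
  have KA : forall E x F, A E -> E x -> B F ->
      (exists y, outcomes B y /\ w (x, y) = 1) -> exists y, F y /\ w (x, y) = 1.
    move=> E x F hE Ex hF [y [[F' hF' F'y] wy]].
    have e1 : (\esum_(y in F') (w (x, y))%:E)%E = 1%E.
      apply: (@esum_one _ _ _ _ (fun y1 F'y1 => w01 E F' x y1 hE hF' Ex F'y1) (y)) => //.
      by move=> y1 F'y1 w1; case: (uq E F' hE hF' x y1 x y Ex F'y1 Ex F'y w1 wy).
    have e2 : (\esum_(y in F) (w (x, y))%:E)%E = 1%E.
      by rewrite (nsB x _ F F') //; exists E.
    exact: (@esum_ex _ _ F (fun y => w (x, y)) (fun y1 Fy1 => w01 E F x y1 hE hF Ex Fy1) e2).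
  have KB : forall F y E, B F -> F y -> A E ->
      (exists x, outcomes A x /\ w (x, y) = 1) -> exists x, E x /\ w (x, y) = 1.
    move=> F y E hF Fy hE [x [[E' hE' E'x] wx]].
    have e1 : (\esum_(x in E') (w (x, y))%:E)%E = 1%E.
      apply: (@esum_one _ _ _ _ (fun x1 E'x1 => w01 E' F x1 y hE' hF E'x1 Fy) (x)) => //.
      by move=> x1 E'x1 w1; case: (uq E' F hE' hF x1 y x y E'x1 Fy E'x Fy w1 wx).
    have e2 : (\esum_(x in E) (w (x, y))%:E)%E = 1%E.
      by rewrite (nsA y _ E E') //; exists F.
    exact: (@esum_ex _ _ E (fun x => w (x, y)) (fun x1 Ex1 => w01 E F x1 y hE hF Ex1 Fy) e2).
  pose a x : R := if pselect (exists y, outcomes B y /\ w (x, y) = 1) then 1 else 0.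
  pose b y : R := if pselect (exists x, outcomes A x /\ w (x, y) = 1) then 1 else 0.
  have a01 : forall x, a x = 0 \/ a x = 1.
    by move=> x; rewrite /a; case: pselect; [right|left].
  have b01 : forall y, b y = 0 \/ b y = 1.
    by move=> y; rewrite /b; case: pselect; [right|left].
  exists a, b; split.
  + split; first by move=> x _; case: (a01 x) => ->; rewrite ?lexx ?ler01.
    move=> E hE.
    have [[x0 y0] [[Ex0 Fy0] w0]] := esum_ex (f01 E F0 hE hF0) (s1 E F0 hE hF0).
    apply: (@esum_one _ _ _ _ (fun x _ => a01 x) (x0)) => //.
    * rewrite /a; case: pselect => // -[]; exists y0; split => //.
      by exists F0.
    * move=> x Ex; rewrite /a; case: pselect => h; last first.
        by move=> /eqP; rewrite eq_sym oner_eq0.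
      move=> _.
      have [y [Fy wy]] := KA E x F0 hE Ex hF0 h.
      by case: (uq E F0 hE hF0 x y x0 y0 Ex Fy Ex0 Fy0 wy w0).
  + by move=> x _; exact: a01.
  + split; first by move=> y _; case: (b01 y) => ->; rewrite ?lexx ?ler01.
    move=> F hF.
    have [[x0 y0] [[Ex0 Fy0] w0]] := esum_ex (f01 E0 F hE0 hF) (s1 E0 F hE0 hF).
    apply: (@esum_one _ _ _ _ (fun y _ => b01 y) (y0)) => //.
    * rewrite /b; case: pselect => // -[]; exists x0; split => //.
      by exists E0.
    * move=> y Fy; rewrite /b; case: pselect => h; last first.
        by move=> /eqP; rewrite eq_sym oner_eq0.
      move=> _.
      have [x [Ex wx]] := KB F y E0 hF Fy hE0 h.
      by case: (uq E0 F hE0 hF x y x0 y0 Ex Fy Ex0 Fy0 wx w0).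
  + by move=> y _; exact: b01.
  + move=> x y [E hE Ex] [F hF Fy].
    case: (w01 E F x y hE hF Ex Fy) => wxy.
    * rewrite wxy /a /b; case: (pselect (exists y0, outcomes B y0 /\ w (x, y0) = 1)) => ha; last by rewrite mul0r.
      case: (pselect (exists x0, outcomes A x0 /\ w (x0, y) = 1)) => hb; last by rewrite mulr0.
      have [y' [Fy' wy']] := KA E x F hE Ex hF ha.
      have [x' [Ex' wx']] := KB F y E hF Fy hE hb.
      case: (uq E F hE hF x y' x' y Ex Fy' Ex' Fy wy' wx') => ex _.
      by move: wx'; rewrite -ex wxy => /eqP; rewrite eq_sym oner_eq0.
    * rewrite wxy /a /b; case: (pselect (exists y0, outcomes B y0 /\ w (x, y0) = 1)) => ha; last first.
        by exfalso; apply: ha; exists y; split => //; exists F.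
      case: (pselect (exists x0, outcomes A x0 /\ w (x0, y) = 1)) => hb; last by exfalso; apply: hb; exists x; split => //; exists E.
      by rewrite mulr1.
- have [a [pa da]] := @df_exists R X A tsA scA.
  have [b [pb db]] := @df_exists R Y B tsB scB.
  exists a, b; split; [exact: pa|exact: da|exact: pb|exact: db|].
  move=> x y [E hE _] [F hF _].
  by exfalso; apply: hne; split; [exists E | exists F].
Qed.
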